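(* Let $B=[\mathbf a_1\ \cdots\ \mathbf a_n]$ be an $m\times n$ integer matrix with columns $\mathbf a_i$ such that $\mathbf a_1=\mathbf a_2$, and let $H=\ker(B)\cap\mathbb N_0^n$. Let $B'=[\mathbf a_1\ \mathbf a_3\ \cdots\ \mathbf a_n]$ and $H'=\ker(B')\cap\mathbb N_0^{n-1}$. Then there is a transfer homomorphism $\theta\colon H\to H'$.
   Context: $H$ and $H'$ are monoids under addition. A transfer homomorphism between reduced atomic monoids $H\to T$ is a surjective monoid homomorphism $\theta$ with $\theta^{-1}(0)=\{0\}$ such that whenever $\theta(a)=s+t$ with $s,t\in T$, there exist $b,c\in H$ with $a=b+c$, $\theta(b)=s$, $\theta(c)=t$. *)

(* Defs.v *)
From mathcomp Require Import all_boot all_order all_algebra.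
Set Implicit Arguments. Unset Strict Implicit. Unset Printing Implicit Defensive.
Import GRing.Theory Num.Theory.
Local Open Scope ring_scope.

Definition nonneg_ker (m n : nat) (B : 'M[int]_(m, n)) (x : 'cV[int]_n) : Prop :=
  (forall i, 0 <= x i 0) /\ B *m x = 0.

Definition is_transfer_hom (U V : zmodType) (H : U -> Prop) (T : V -> Prop)
    (theta : U -> V) : Prop :=
  (forall x, H x -> T (theta x)) /\
  theta 0 = 0 /\
  (forall x y, H x -> H y -> theta (x + y) = theta x + theta y) /\
  (forall t, T t -> exists x, H x /\ theta x = t) /\
  (forall x, H x -> theta x = 0 -> x = 0) /\
  (forall a s t, H a -> T s -> T t -> theta a = s + t ->
         exists b c, [/\ H b, H c, a = b + c, theta b = s & theta c = t]).

(* Main.v *)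
Require Import Defs.
From mathcomp Require Import all_boot all_order all_algebra.
From mathcomp Require Import zify.
Local Open Scope ring_scope.
Import GRing.Theory Num.Theory Order.TTheory.

Section S.
Variables (m n : nat) (B : 'M[int]_(m, n.+2)).
Let i1 : 'I_n.+2 := inord 1.

Definition th (x : 'cV[int]_n.+2) : 'cV[int]_n.+1 :=
  \col_j (x (lift i1 j) 0 + (if j == ord0 then x i1 0 else 0)).

Lemma lift10 : lift i1 ord0 = ord0.
Proof. by apply: val_inj; rewrite /= /bump inordK. Qed.

Lemma thD (x y : 'cV[int]_n.+2) : th (x + y) = th x + th y.
Proof.
apply/matrixP => j k; rewrite !mxE; by case: (j == ord0); rewrite ?addr0 // addrACA.
Qed.

Lemma thB (x y : 'cV[int]_n.+2) : th (x - y) = th x - th y.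
Proof.
apply/matrixP => j k; rewrite !mxE; by case: (j == ord0); rewrite ?subr0 // opprD addrACA.
Qed.

Lemma keyB (HB : col ord0 B = col i1 B) x :
  B *m x = col' i1 B *m th x.
Proof.
apply/matrixP => i k; have -> : k = 0 by apply: ord1.
rewrite !mxE (bigD1_ord i1) //=.
under [X in _ = X]eq_bigr => j _ do rewrite !mxE mulrDr.
rewrite big_split /= addrC; congr (_ + _).
rewrite (bigD1 ord0) //= big1 ?addr0; last first.
  by move=> j /negbTE ->; rewrite mulr0.
rewrite lift10 ?eqxx.
by have := congr1 (fun M : 'cV[int]_m => M i 0) HB; rewrite !mxE => ->.
Qed.
End S.
Arguments th {n}.

Lemma nn0 (p q : int) : 0 <= p -> 0 <= q -> p + q = 0 -> p = 0 /\ q = 0.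
Proof. lia. Qed.
Lemma h1 (s a : int) : 0 <= s - (if s <= a then s else a).
Proof. case: ifP; lia. Qed.
Lemma h3 (s a : int) : 0 <= a - (if s <= a then s else a).
Proof. case: ifP; lia. Qed.
Lemma h2 (a0 a1 s0 t0 : int) : 0 <= a1 -> 0 <= t0 -> a0 + a1 = s0 + t0 ->
  0 <= a1 - (s0 - if s0 <= a0 then s0 else a0).
Proof. case: ifP; lia. Qed.
Lemma entry n (x y : 'cV[int]_n) j : x = y -> x j 0 = y j 0.
Proof. by move=> ->. Qed.
Arguments entry {n x y}.

Theorem lemma3p15 (m n : nat) (B : 'M[int]_(m, n.+2)) :
  col ord0 B = col (inord 1) B ->
  exists theta : 'cV[int]_n.+2 -> 'cV[int]_n.+1,
    is_transfer_hom (nonneg_ker B) (nonneg_ker (col' (inord 1) B)) theta.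
Proof.
move=> HB; exists (@th n).
have K := @keyB m n B HB.
have L0 : lift (inord 1) (@ord0 n) = ord0 := lift10 n.
have U1 : unlift (inord 1 : 'I_n.+2) (inord 1) = None by rewrite unlift_none.
split.
  move=> x [x0 Bx]; split; last by rewrite -K.
  by move=> j; rewrite mxE; case: ifP => _; rewrite ?addr0 ?addr_ge0.
split.
  by apply/matrixP => j k; rewrite !mxE; case: ifP; rewrite addr0.
split; first by move=> x y _ _; apply: thD.
split.
  move=> t [t0 Bt].
  pose x : 'cV[int]_n.+2 := \col_k (match unlift (inord 1) k with Some j => t j 0 | None => 0 end).
  have thx : th x = t.
    apply/matrixP => j k; rewrite (ord1 k) !mxE liftK U1.
    by case: ifP; rewrite addr0.
  exists x; split => //; split; last by rewrite K thx.
  by move=> k; rewrite mxE; case: (unlift _ k).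
split.
  move=> x [x0 _] h; apply/matrixP => k c; rewrite (ord1 c) [RHS]mxE.
  have h0 := entry ord0 h; rewrite !mxE L0 eqxx in h0.
  have := x0 ord0; have := x0 (inord 1).
  case: (unliftP (inord 1) k) => [j ->|->]; last by move=> q p; have [] := @nn0 _ _ p q h0.
  have hj := entry j h; rewrite !mxE in hj.
  move: hj; case: eqP => [->|_]; rewrite ?L0; first by move=> hj; have [] := @nn0 _ _ (x0 ord0) (x0 (inord 1)) hj.
  by rewrite addr0.
move=> a s t [a0 Ba] [s0 Bs] [t0 Bt] e.
pose b0 := if s ord0 0 <= a ord0 0 then s ord0 0 else a ord0 0.
pose b : 'cV[int]_n.+2 := \col_k (match unlift (inord 1) k with
   Some j => if j == ord0 then b0 else s j 0 | None => s ord0 0 - b0 end).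
have e0 := entry ord0 e; rewrite !mxE L0 eqxx in e0.
have ej : forall j, j != ord0 -> a (lift (inord 1) j) 0 = s j 0 + t j 0.
  by move=> j /negbTE jn; have := entry j e; rewrite !mxE jn addr0.
have thb : th b = s.
  apply/matrixP => j k; rewrite (ord1 k) !mxE liftK U1.
  by case: ifP => [/eqP ->|]; rewrite ?addr0 // addrC subrK.
have := s0 ord0; have := t0 ord0; have := a0 ord0; have := a0 (inord 1).
move=> A1 A0 T0 S0.
exists b, (a - b); split.
- split; last by rewrite K thb.
  move=> k; rewrite mxE; case: (unlift _ k) => [j|]; last by apply: h1.
  by case: ifP => _ //; rewrite /b0; case: ifP.
- split; last by rewrite mulmxBr Ba K thb Bs subr0.
  move=> k; rewrite !mxE.
  case: (unliftP (inord 1) k) => [j ->|->]; rewrite ?liftK ?U1; last first.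
    exact: @h2 _ _ _ _ A1 T0 e0.
  case: ifP => [/eqP ->|/negbT jn]; first by rewrite L0; apply: h3.
  by rewrite ej // addrAC subrr add0r.
- by rewrite addrC subrK.
- by [].
- by rewrite thB thb e addrC addKr.
Qed.
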